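(* Let $c\in(0,1)$ and let $(G,\phi)$ be a (random) locally finite connected rooted undirected graph with degrees $(d_j)_{j\in V}$, and let $R_\phi$ be its root-PageRank with damping factor $c$. For $\alpha>0$ let $d_\phi^{(\ge\alpha)}=\#\{j\in V: j\sim\phi,\ d_j\ge\alpha\}$. Assume there exist $\alpha>0$ and $\varepsilon\in(0,1)$ such that, as $k\to\infty$, $$\mathbb{P}\big(d_\phi>k,\ d_\phi^{(\ge\alpha)}\ge(1-\varepsilon)d_\phi\big)=o\big(\mathbb{P}(d_\phi>k)\big).$$ Then $$\mathbb{P}(R_\phi>k)\ge(1+o(1))\,\mathbb{P}\Big(d_\phi>\frac{\alpha k}{\varepsilon c(1-c)}\Big)\qquad\text{as }k\to\infty.$$
   Context: A rooted graph is a pair $(G,\phi)$ with $G=(V,E)$ a graph and $\phi\in V$; it is locally finite if every vertex has finite degree; random rooted graphs are random elements of the space of locally finite connected rooted graphs up to root-preserving isomorphism. With $\boldsymbol{A}=(a_{ij})$ the adjacency matrix and $\boldsymbol{P}=(p_{ij})$, $p_{ij}=a_{ij}/d_i$ (a possibly infinite matrix), the root-PageRank is $R_\phi=(1-c)\sum_{s=0}^\infty c^s\sum_{j\in V}(\boldsymbol{P}^s)_{j\phi}$. $j\sim\phi$ means $j$ and $\phi$ are adjacent. $f=o(g)$ as $k\to\infty$ means $\limsup_{k\to\infty}|f(k)/g(k)|=0$. *)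

(* Defs.v *)
From HB Require Import structures.
From mathcomp Require Import all_boot all_order all_algebra.
From mathcomp Require Import finmap.
From mathcomp Require Import all_classical all_reals all_analysis.
Set Implicit Arguments. Unset Strict Implicit. Unset Printing Implicit Defensive.
Import Order.TTheory GRing.Theory Num.Theory.
Import numFieldNormedType.Exports.
Local Open Scope classical_set_scope.
Local Open Scope ring_scope.

(* A (labelled representative of a) rooted graph: vertex set [vs : set nat],
   adjacency relation [adj], root [phi]. *)
Section Graph.
Variable R : realType.
Variables (vs : set nat) (adj : nat -> nat -> bool).

Definition nbrs (i : nat) : set nat := [set j | adj i j].

Definition deg (i : nat) : nat := (#|` fset_set (nbrs i)|)%fset.

Definition deg_ge (alpha : R) (i : nat) : nat :=
  (#|` fset_set [set j | adj i j /\ alpha <= (deg j)%:R]|)%fset.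

Definition simple_graph : Prop :=
  [/\ forall i j, adj i j = adj j i,
      forall i, ~~ adj i i &
      forall i j, adj i j -> vs i /\ vs j].

Definition locally_finite : Prop := forall i, vs i -> finite_set (nbrs i).

Definition connected_graph : Prop :=
  forall i j, vs i -> vs j -> exists s : seq nat, path adj i s /\ last i s = j.

Definition lfc_rooted_graph (phi : nat) : Prop :=
  [/\ simple_graph, locally_finite, connected_graph & vs phi].

Definition pmat (i j : nat) : R := if adj i j then ((deg i)%:R)^-1 else 0.

Fixpoint Ppow (s : nat) (i j : nat) : \bar R :=
  match s with
  | 0%N => ((i == j)%:R)%:E
  | s'.+1 => \esum_(k in vs) (Ppow s' i k * (pmat k j)%:E)%E
  end.

Definition pagerank (c : R) (phi : nat) : \bar R :=
  ((1 - c)%:E * \esum_(s in [set: nat]) ((c ^+ s)%:E * \esum_(j in vs) Ppow s j phi))%E.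
End Graph.

Definition littleo_infty (R : realType) (f g : R -> R) : Prop :=
  forall eta : R, 0 < eta -> \forall k \near +oo, `|f k| <= eta * `|g k|.

(* Main.v *)
Set Warnings "-all".
Require Import Defs.
From HB Require Import structures.
From mathcomp Require Import all_boot all_order all_algebra finmap.
From mathcomp Require Import all_classical all_reals all_analysis.
From mathcomp Require Import measurable_realfun measurable_fun_approximation.
From mathcomp Require Import ring lra.
Import Order.TTheory GRing.Theory Num.Theory.
Import numFieldNormedType.Exports.
Local Open Scope classical_set_scope.
Local Open Scope ring_scope.
Lemma esum_cst (R : realType) (A : set nat) (r : R) : finite_set A -> 0 <= r ->
  (\esum_(i in A) r%:E = (r * (#|` fset_set A|)%fset%:R)%:E)%E.
Proof.
move=> fA r0; rewrite esum_fset//.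
rewrite fsbig_finite//= sumEFin card_fset_sum1 natr_sum mulr_sumr.
by congr (_%:E); apply: eq_bigr => i _; rewrite mulr1.
Qed.

Section Det.
Variables (R : realType) (vs : set nat) (adj : nat -> nat -> bool).
Hypotheses (Hs : simple_graph vs adj) (Hlf : locally_finite vs adj).

Lemma nbrs_fin i : finite_set (nbrs adj i).
Proof.
case: Hs => sym irr inv; case: (pselect (vs i)) => [/Hlf//|ni].
have -> : nbrs adj i = set0 by apply/seteqP; split => j //= /inv [].
exact: finite_set0.
Qed.

Lemma pmat_ge0 i j : 0 <= pmat R adj i j.
Proof. by rewrite /pmat; case: ifP => // _; rewrite invr_ge0. Qed.

Lemma Ppow_ge0 s i j : (0 <= Ppow R vs adj s i j)%E.
Proof.
elim: s i j => [|s IH] i j /=; first by rewrite lee_fin.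
by apply: esum_ge0 => k _; apply: mule_ge0 => //; rewrite lee_fin pmat_ge0.
Qed.

Lemma Ppow1_ge j phi : vs j -> ((pmat R adj j phi)%:E <= Ppow R vs adj 1 j phi)%E.
Proof.
move=> vj /=; apply: esum_ge; exists [set j].
  by split; [exact: finite_set1| move=> k /= ->].
by rewrite fsbig_set1 eqxx mul1e.
Qed.

Lemma pr_ge (c : R) phi : 0 < c < 1 ->
  (((1 - c) * c)%:E * (\esum_(j in vs) Ppow R vs adj 1 j phi) <= pagerank vs adj c phi)%E.
Proof.
case/andP => c0 c1; rewrite /pagerank EFinM -muleA.
apply: lee_wpmul2l; first by rewrite lee_fin subr_ge0 ltW.
apply: esum_ge; exists [set 1%N].
  by split; [exact: finite_set1| exact: subsetT].
by rewrite fsbig_set1 expr1.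
Qed.


Definition Lset (alpha : R) phi := [set j | adj phi j /\ ~ (alpha <= (deg adj j)%:R)].

Lemma esum_vs_ge alpha phi :
  (\esum_(j in Lset alpha phi) (pmat R adj j phi)%:E <= \esum_(j in vs) Ppow R vs adj 1 j phi)%E.
Proof.
case: Hs => sym irr inv.
have LV : Lset alpha phi `<=` vs by move=> j [/inv []].
rewrite -(setIidr LV) esum_mkcondr; apply: le_esum => j vj.
by case: ifP => _; [exact: Ppow1_ge | exact: Ppow_ge0].
Qed.

Lemma deg_gt0 i j : adj i j -> (0 < deg adj i)%N.
Proof.
move=> aij; rewrite /deg cardfs_gt0; apply/fset0Pn; exists j.
rewrite in_fset_set; [exact: mem_set | exact: nbrs_fin].
Qed.

Lemma esum_L_ge alpha phi : 0 < alpha ->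
  ((alpha^-1 * (#|` fset_set (Lset alpha phi)|)%fset%:R)%:E
    <= \esum_(j in Lset alpha phi) (pmat R adj j phi)%:E)%E.
Proof.
case: Hs => sym irr inv => a0.
have fL : finite_set (Lset alpha phi).
  by apply: (sub_finite_set _ (nbrs_fin phi)) => j [].
rewrite -esum_cst//; last by rewrite invr_ge0 ltW.
apply: le_esum => j [apj nd]; rewrite lee_fin /pmat sym apj.
have dp : (0 < deg adj j)%N by apply: (@deg_gt0 j phi); rewrite sym.
rewrite lef_pV2 ?posrE ?ltr0n//.
by apply: ltW; rewrite ltNge; apply/negP.
Qed.

Lemma card_L alpha phi :
  (#|` fset_set (Lset alpha phi)|)%fset%:R = (deg adj phi)%:R - (deg_ge adj alpha phi)%:R :> R.
Proof.
have fN := nbrs_fin phi.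
have fG : finite_set (nbrs adj phi `&` [set j | alpha <= (deg adj j)%:R]).
  by apply: (sub_finite_set _ fN) => j [].
have fL : finite_set (nbrs adj phi `&` ~` [set j | alpha <= (deg adj j)%:R]).
  by apply: (sub_finite_set _ fN) => j [].
have H := @esumID R _ [set j | alpha <= (deg adj j)%:R] (nbrs adj phi) (fun _ => 1%:E)
   (fun _ _ => lee01).
move: H; rewrite !esum_cst// -EFinD => -[]; rewrite !mul1r => ->.
by rewrite /deg_ge addrAC subrr add0r.
Qed.

Lemma pagerank_big (c alpha eps x : R) phi : 0 < c < 1 -> 0 < alpha -> 0 < eps ->
  x < (deg adj phi)%:R ->
  ~ ((1 - eps) * (deg adj phi)%:R <= (deg_ge adj alpha phi)%:R) ->
  (((1 - c) * c * eps / alpha * x)%:E < pagerank vs adj c phi)%E.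
Proof.
move=> hc a0 e0 xd nB.
have /andP[c0 c1] := hc.
apply: (@lt_le_trans _ _ (((1 - c) * c)%:E * (alpha^-1 * (#|` fset_set (Lset alpha phi)|)%fset%:R)%:E)%E); last first.
  apply: (le_trans _ (pr_ge c phi hc)); apply: lee_wpmul2l.
    by rewrite lee_fin mulr_ge0 // ?subr_ge0 ltW.
  exact: le_trans (esum_L_ge alpha phi a0) (esum_vs_ge _ _).
rewrite -EFinM lte_fin card_L.
have K0 : 0 < (1 - c) * c / alpha by rewrite divr_gt0 // mulr_gt0 // subr_gt0.
have H1 : eps * x < (deg adj phi)%:R - (deg_ge adj alpha phi)%:R.
  have : (deg_ge adj alpha phi)%:R < (1 - eps) * (deg adj phi)%:R :> R.
    by rewrite ltNge; apply/negP.
  have : eps * x < eps * (deg adj phi)%:R by rewrite ltr_pM2l.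
  lra.
have -> : (1 - c) * c * eps / alpha * x = (1 - c) * c / alpha * (eps * x).
  by field; rewrite gt_eqF.
have -> : (1 - c) * c * (alpha^-1 * ((deg adj phi)%:R - (deg_ge adj alpha phi)%:R))
   = (1 - c) * c / alpha * ((deg adj phi)%:R - (deg_ge adj alpha phi)%:R).
  by field; rewrite gt_eqF.
by rewrite ltr_pM2l.
Qed.
End Det.
Section Meas.
Context d (T : measurableType d) (R : realType).

Lemma fib_set (f : T -> nat) (Q : nat -> Prop) :
  (forall n, measurable [set w | f w = n]) -> measurable [set w | Q (f w)].
Proof.
move=> mf.
have -> : [set w | Q (f w)] = \bigcup_n ([set w | f w = n] `&` [set _ | Q n]).
  apply/seteqP; split => [w Qw|w [n _ [/= <- //]]].
  by exists (f w).
apply: bigcupT_measurable => n; case: (pselect (Q n)) => q.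
  have -> : [set _ : T | Q n] = setT by apply/seteqP; split.
  by rewrite setIT.
have -> : [set _ : T | Q n] = set0 by apply/seteqP; split.
by rewrite setI0.
Qed.

Lemma fib_fun (f : T -> nat) (g : nat -> \bar R) :
  (forall n, measurable [set w | f w = n]) -> measurable_fun setT (fun w => g (f w)).
Proof.
move=> mf _ B mB; rewrite setTI; exact: (fib_set _ (fun n => B (g n)) mf).
Qed.

Lemma fib_of_meas (f : T -> nat) :
  measurable_fun setT (fun w => ((f w)%:R)%:E : \bar R) ->
  forall n, measurable [set w | f w = n].
Proof.
move=> mf n.
have -> : [set w | f w = n] = (setT `&` [set w | ((n%:R)%:E <= ((f w)%:R)%:E :> \bar R)%E])
   `\` (setT `&` [set w | ((n.+1%:R)%:E <= ((f w)%:R)%:E :> \bar R)%E]).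
  apply/seteqP; split => w /=.
    by move=> ->; rewrite !lee_fin !ler_nat leqnn ltnn; split => // -[].
  rewrite !lee_fin !ler_nat => -[[_ H1] H2].
  have H3 : ~~ (n.+1 <= f w)%N by apply/negP => h; apply: H2.
  by apply/eqP; rewrite eqn_leq H1 andbT -ltnS ltnNge.
by apply: measurableD; apply: emeasurable_fun_c_infty.
Qed.

Lemma dep_meas (F : T -> nat -> \bar R) (r : T -> nat) :
  (forall n, measurable_fun setT (F^~ n)) -> (forall n, measurable [set w | r w = n]) ->
  measurable_fun setT (fun w => F w (r w)).
Proof.
move=> mF mr _ B mB; rewrite setTI.
have -> : (fun w => F w (r w)) @^-1` B = \bigcup_n ([set w | r w = n] `&` ((F^~ n) @^-1` B)).
  apply/seteqP; split => [w Bw|w [n _ [/= <- //]]].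
  by exists (r w).
apply: bigcupT_measurable => n; apply: measurableI => //.
by have := mF n measurableT B mB; rewrite setTI.
Qed.

Lemma esum_meas (X : T -> nat -> \bar R) (S : T -> set nat) :
  (forall w k, (0 <= X w k)%E) -> (forall k, measurable_fun setT (X^~ k)) ->
  (forall k, measurable [set w | S w k]) ->
  measurable_fun setT (fun w => \esum_(k in S w) X w k).
Proof.
move=> X0 mX mS.
have -> : (fun w => \esum_(k in S w) X w k) =
   (fun w => (\sum_(k <oo | k \in xpredT) (if k \in S w then X w k else 0))%E).
  apply/funext => w; rewrite esum_mkcond -nneseries_esumT; last first.
    by move=> k; case: ifP.
  done.
apply: ge0_emeasurable_sum.
  by move=> k w _ _; case: ifP.
move=> k _; apply: measurable_fun_ifT => //.
apply: (measurable_fun_bool true); rewrite setTI.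
have -> : (fun w => k \in S w) @^-1` [set true] = [set w | S w k].
  by apply/seteqP; split => w /=; [exact: set_mem | exact: mem_set].
exact: mS.
Qed.

Lemma count_meas (Q : T -> nat -> bool) :
  (forall k, measurable [set w | Q w k]) -> (forall w, finite_set [set k | Q w k]) ->
  measurable_fun setT (fun w => ((#|` fset_set [set k | Q w k]|)%fset%:R)%:E : \bar R).
Proof.
move=> mQ fQ.
have -> : (fun w => ((#|` fset_set [set k | Q w k]|)%fset%:R)%:E : \bar R) =
   (fun w => \esum_(k in [set k | Q w k]) (1%R)%:E).
  by apply/funext => w; rewrite esum_cst// mul1r.
by apply: esum_meas => //; move=> k; exact: measurable_cst.
Qed.

Lemma fib_set2 (f g : T -> nat) (Q : nat -> nat -> Prop) :
  (forall n, measurable [set w | f w = n]) -> (forall n, measurable [set w | g w = n]) ->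
  measurable [set w | Q (f w) (g w)].
Proof.
move=> mf mg.
have -> : [set w | Q (f w) (g w)] = \bigcup_n ([set w | f w = n] `&` [set w | Q n (g w)]).
  apply/seteqP; split => [w Qw|w [n _ [/= <- //]]].
  by exists (f w).
apply: bigcupT_measurable => n; apply: measurableI => //.
exact: (fib_set g (Q n) mg).
Qed.

End Meas.
Arguments fib_set {d T} f Q.
Arguments fib_fun {d T R} f g.
Arguments fib_of_meas {d T R} f.
Arguments dep_meas {d T R} F r.
Arguments esum_meas {d T R} X S.
Arguments count_meas {d T R} Q.
Arguments fib_set2 {d T} f g Q.



Theorem mainTheorem4 (R : realType) (d : measure_display) (T : measurableType d)
  (P : probability T R)
  (vs : T -> set nat) (adj : T -> nat -> nat -> bool) (root : T -> nat)
  (Hmvs : forall i, measurable [set w | vs w i])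
  (Hmadj : forall i j, measurable [set w | adj w i j])
  (Hmroot : forall i, measurable [set w | root w = i])
  (Hgraph : forall w, lfc_rooted_graph (vs w) (adj w) (root w))
  (c : R) (hc : 0 < c < 1) (alpha eps : R) (halpha : 0 < alpha) (heps : 0 < eps < 1)
  (Hyp : littleo_infty
     (fun k => fine (P [set w | k < (deg (adj w) (root w))%:R /\
                       (1 - eps) * (deg (adj w) (root w))%:R
                         <= (deg_ge (adj w) alpha (root w))%:R]))
     (fun k => fine (P [set w | k < (deg (adj w) (root w))%:R]))) :
  exists h : R -> R, h x @[x --> +oo] --> 0 /\
    \forall k \near +oo,
      ((1 + h k)%:E * P [set w | (alpha * k / (eps * c * (1 - c)) < (deg (adj w) (root w))%:R)%R]
        <= P [set w | k%:E < pagerank (vs w) (adj w) c (root w)])%E.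
Proof.
have Hs w : simple_graph (vs w) (adj w) by case: (Hgraph w).
have Hlf w : locally_finite (vs w) (adj w) by case: (Hgraph w).
have mdeg n : measurable_fun setT (fun w => ((deg (adj w) n)%:R)%:E : \bar R).
  apply: (count_meas (fun w k => adj w n k)) => [k|w]; first exact: Hmadj.
  exact: (nbrs_fin _ _ (Hs w) (Hlf w)).
have fdeg n m : measurable [set w | deg (adj w) n = m] by exact: fib_of_meas (mdeg n) m.
have fdegr m : measurable [set w | deg (adj w) (root w) = m].
  exact: fib_of_meas (dep_meas (fun w n => ((deg (adj w) n)%:R)%:E) root mdeg Hmroot) m.
have Edg w n : deg_ge (adj w) alpha n =
    (#|` fset_set [set k | adj w n k && (alpha <= (deg (adj w) k)%:R)]|)%fset.
  rewrite /deg_ge; congr (#|` fset_set _|)%fset; apply/seteqP; split => k /=.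
    by case=> -> ->.
  by case/andP => -> ->.
have mdg n : measurable_fun setT (fun w => ((deg_ge (adj w) alpha n)%:R)%:E : \bar R).
  under eq_fun do rewrite Edg.
  apply: count_meas => [k|w].
    have -> : [set w | adj w n k && (alpha <= (deg (adj w) k)%:R)] =
       [set w | adj w n k] `&` [set w | alpha <= (deg (adj w) k)%:R].
      by apply/seteqP; split => w /=; [case/andP | case=> -> ->].
    apply: measurableI; first exact: Hmadj.
    exact: (fib_set (fun w => deg (adj w) k) (fun m => alpha <= m%:R) (fdeg k)).
  apply: (sub_finite_set _ (nbrs_fin _ _ (Hs w) (Hlf w) n)) => k /= /andP[] //.
have fdgr m : measurable [set w | deg_ge (adj w) alpha (root w) = m].
  exact: fib_of_meas (dep_meas (fun w n => ((deg_ge (adj w) alpha n)%:R)%:E) root mdg Hmroot) m.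
have madj k j : measurable_fun setT (fun w => adj w k j).
  apply: (measurable_fun_bool true); rewrite setTI; exact: Hmadj.
have mpmat k j : measurable_fun setT (fun w => (pmat R (adj w) k j)%:E).
  have -> : (fun w => (pmat R (adj w) k j)%:E) =
     (fun w => if adj w k j then (((deg (adj w) k)%:R)^-1)%:E else 0%E).
    by apply/funext => w; rewrite /pmat; case: ifP.
  apply: measurable_fun_ifT; [exact: madj | | by []].
  exact: (fib_fun (fun w => deg (adj w) k) (fun m => ((m%:R)^-1)%:E) (fdeg k)).
have mPpow s i j : measurable_fun setT (fun w => Ppow R (vs w) (adj w) s i j).
  elim: s i j => [|s IH] i j /=; first by [].
  apply: (esum_meas (fun w k => (Ppow R (vs w) (adj w) s i k * (pmat R (adj w) k j)%:E)%E) vs).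
  - move=> w k; apply: mule_ge0; first exact: Ppow_ge0.
    by rewrite lee_fin pmat_ge0.
  - by move=> k; apply: emeasurable_funM.
  - exact: Hmvs.
have mPR n : measurable_fun setT (fun w => pagerank (vs w) (adj w) c n).
  rewrite /pagerank; apply: emeasurable_funM; first by [].
  apply: (esum_meas (fun w s => ((c ^+ s)%:E * \esum_(j in vs w) Ppow R (vs w) (adj w) s j n)%E)
                    (fun _ => setT)).
  - move=> w s; apply: mule_ge0.
      by rewrite lee_fin exprn_ge0 // ltW //; case/andP: hc.
    by apply: esum_ge0 => j _; exact: Ppow_ge0.
  - move=> s; apply: emeasurable_funM; first by [].
    apply: (esum_meas (fun w j => Ppow R (vs w) (adj w) s j n) vs) => //.
    by move=> w j; exact: Ppow_ge0.
  - by move=> k; exact: measurableT.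
have mPRr : measurable_fun setT (fun w => pagerank (vs w) (adj w) c (root w)).
  exact: (dep_meas (fun w n => pagerank (vs w) (adj w) c n) root mPR Hmroot).
have mRk (k : R) : measurable [set w | (k%:E < pagerank (vs w) (adj w) c (root w))%E].
  by have := emeasurable_fun_o_infty measurableT mPRr k%:E; rewrite setTI.
have mA (x : R) : measurable [set w | x < (deg (adj w) (root w))%:R].
  exact: (fib_set (fun w => deg (adj w) (root w)) (fun m => x < m%:R) fdegr).
have mB (x : R) : measurable [set w | x < (deg (adj w) (root w))%:R /\
                       (1 - eps) * (deg (adj w) (root w))%:R
                         <= (deg_ge (adj w) alpha (root w))%:R].
  exact: (fib_set2 (fun w => deg (adj w) (root w)) (fun w => deg_ge (adj w) alpha (root w))
     (fun m m' => x < m%:R /\ (1 - eps) * m%:R <= m'%:R) fdegr fdgr).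
have K0 : 0 < eps * c * (1 - c).
  by case/andP: hc => c0 c1; case/andP: heps => e0 e1; rewrite !mulr_gt0 // subr_gt0.
exists (fun k => - (fine (P [set w | alpha * k / (eps * c * (1 - c)) < (deg (adj w) (root w))%:R /\
                       (1 - eps) * (deg (adj w) (root w))%:R
                         <= (deg_ge (adj w) alpha (root w))%:R]) /
                    fine (P [set w | alpha * k / (eps * c * (1 - c)) < (deg (adj w) (root w))%:R]))).
split.
  apply/cvgrPdist_le => e e0.
  have [M [Mr HM]] := Hyp e e0.
  exists (M * (eps * c * (1 - c)) / alpha); split; first exact: num_real.
  move=> x Mx.
  have Mk : M < alpha * x / (eps * c * (1 - c)).
    rewrite ltr_pdivlMr //; move: Mx; rewrite ltr_pdivrMr //; lra.
  have /= H := HM _ Mk.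
  move: H.
  set b := fine (P _).
  set a := fine (P _).
  move=> H.
  have a0 : 0 <= a by apply: fine_ge0; apply: measure_ge0.
  rewrite sub0r opprK.
  case: (eqVneq a 0) => [->|an0]; first by rewrite invr0 mulr0 normr0 ltW.
  rewrite (ger0_norm a0) in H.
  have ap : 0 < a by rewrite lt_neqAle eq_sym an0 a0.
  by rewrite normrM normfV (ger0_norm a0) ler_pdivrMr.
apply: nearW => k.
set x := alpha * k / (eps * c * (1 - c)).
have mA' := mA x.
have mB' := mB x.
have mR' := mRk k.
set A := [set w | x < _] in mA' *.
set B := [set w | x < _ /\ _] in mB' *.
set Rk := [set w | (k%:E < _)%E] in mR' *.
have sub : A `<=` Rk `|` B.
  move=> w Aw.
  case: (pselect ((1 - eps) * (deg (adj w) (root w))%:R <= (deg_ge (adj w) alpha (root w))%:R)) => H.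
    by right.
  left; rewrite /Rk /=.
  have e0 : 0 < eps by case/andP: heps.
  have := pagerank_big R (vs w) (adj w) (Hs w) (Hlf w) c alpha eps x (root w) hc halpha e0 Aw H.
  have -> // : (1 - c) * c * eps / alpha * x = k.
  rewrite /x; field.
  case/andP: hc => c0 c1.
  by apply/and4P; split; apply: lt0r_neq0 => //; rewrite subr_gt0.
have ineq : (P A <= P Rk + P B)%E.
  apply: le_trans (measureU2 P mR' mB').
  by apply: le_measure => //; rewrite inE //; apply: measurableU.
have fA := fin_num_measure P _ mA'.
have fB := fin_num_measure P _ mB'.
have fR := fin_num_measure P _ mR'.
rewrite -(fineK fA) -(fineK fB) -(fineK fR) -EFinD lee_fin in ineq.
rewrite -(fineK fA) -(fineK fR) -EFinM lee_fin.
move: ineq.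
set a := fine (P A). set b := fine (P B). set r := fine (P Rk).
move=> ineq.
have a0 : 0 <= a by apply: fine_ge0; apply: measure_ge0.
have r0 : 0 <= r by apply: fine_ge0; apply: measure_ge0.
case: (eqVneq a 0) => [->|an0]; first by rewrite mulr0.
rewrite mulrDl mul1r mulNr divfK //.
lra.
Qed.
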